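(* Let $a>0$, $c>0$ and $b\ge 0$. Then the system $$\dot x=x(1-y+cx-axz),\qquad \dot y=y(-1+x),\qquad \dot z=z(-b+ax^2)$$ has no rational first integrals.
   Context: A rational first integral is a non-constant rational function $H\in\mathbb{C}(x,y,z)$ with $\mathcal{X}H=0$, where $\mathcal{X}=x(1-y+cx-axz)\partial_x+y(-1+x)\partial_y+z(-b+ax^2)\partial_z$. *)

(* Defs.v *)
From HB Require Import structures.
From mathcomp Require Import all_boot all_order all_algebra.
From mathcomp Require Import reals.
From mathcomp Require Import complex.
From mathcomp Require Import mpoly.
Set Implicit Arguments. Unset Strict Implicit. Unset Printing Implicit Defensive.
Import Order.TTheory GRing.Theory Num.Theory.
Local Open Scope ring_scope.
Local Open Scope complex_scope.

Definition Cx (R : realType) : Type := R[i].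

Definition vx (R : realType) : {mpoly (Cx R)[3]} := 'X_(@Ordinal 3 0 isT).
Definition vy (R : realType) : {mpoly (Cx R)[3]} := 'X_(@Ordinal 3 1 isT).
Definition vz (R : realType) : {mpoly (Cx R)[3]} := 'X_(@Ordinal 3 2 isT).

Definition cst (R : realType) (r : R) : {mpoly (Cx R)[3]} :=
  ((r%:C : Cx R))%:MP.

Definition Xfield (R : realType) (a b c : R) (p : {mpoly (Cx R)[3]})
  : {mpoly (Cx R)[3]} :=
  let x := vx R in let y := vy R in let z := vz R in
  x * (1 - y + cst c * x - cst a * x * z) * (p^`M(@Ordinal 3 0 isT))
  + y * (-1 + x) * (p^`M(@Ordinal 3 1 isT))
  + z * (- cst b + cst a * x ^+ 2) * (p^`M(@Ordinal 3 2 isT)).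

(* A rational function H = P/Q in C(x,y,z) (Q <> 0) is a first integral of X
   iff X(P/Q) = (Q X(P) - P X(Q)) / Q^2 = 0, i.e. Q X(P) = P X(Q). *)
Definition rational_first_integral (R : realType) (a b c : R)
  (P Q : {mpoly (Cx R)[3]}) : Prop :=
  Q != 0 /\ Q * Xfield a b c P = P * Xfield a b c Q.

(* P/Q is constant iff P = k Q for some constant k in C. *)
Definition rat_nonconstant (R : realType) (P Q : {mpoly (Cx R)[3]}) : Prop :=
  ~ exists k : Cx R, P = k%:MP * Q.

(* Main.v *)
Require Import Defs.
From HB Require Import structures.
From mathcomp Require Import all_boot all_order all_algebra.
From mathcomp Require Import reals.
From mathcomp Require Import complex.
From mathcomp Require Import mpoly.
From mathcomp Require Import ring zify.
Import Order.TTheory GRing.Theory Num.Theory.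
Local Open Scope ring_scope.
Set Implicit Arguments. Unset Strict Implicit. Unset Printing Implicit Defensive.

Section Sub.
Variable R : realType.
Local Notation K := (Cx R).
Local Notation MP := {mpoly K[3]}.

Definition sub0_def (i : 'I_3) (p : MP) : MP :=
  p \mPo [tuple (if j == i then 0 else 'X_j) | j < 3].
Fact sub0_key : unit. Proof. by []. Qed.
Definition sub0 := locked_with sub0_key sub0_def.
Lemma sub0E : sub0 = sub0_def. Proof. by rewrite /sub0 unlock. Qed.

Lemma sub0X i m : sub0 i 'X_[m] = if m i == 0%N then 'X_[m] else 0.
Proof.
rewrite sub0E /sub0_def comp_mpolyX; case: eqP => h.
  rewrite [RHS]mpolyXE_id; apply: eq_bigr => j _; rewrite tnth_mktuple.
  by case: eqP => [->|//]; rewrite h !expr0.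
rewrite (bigD1 i) //= tnth_mktuple eqxx expr0n.
by move/eqP/negbTE: h => ->; rewrite mul0r.
Qed.

Lemma sub0D i : {morph sub0 i : p q / p + q}.
Proof. by move=> p q; rewrite sub0E /sub0_def raddfD. Qed.
Lemma sub0B i : {morph sub0 i : p q / p - q}.
Proof. by move=> p q; rewrite sub0E /sub0_def raddfB. Qed.
Lemma sub0M i : {morph sub0 i : p q / p * q}.
Proof. by move=> p q; rewrite sub0E /sub0_def rmorphM. Qed.
Lemma sub0Z i c p : sub0 i (c *: p) = c *: sub0 i p.
Proof. by rewrite sub0E /sub0_def comp_mpolyZ. Qed.
Lemma sub0C i c : sub0 i c%:MP = c%:MP.
Proof. by rewrite sub0E /sub0_def comp_mpolyC. Qed.
Lemma sub00 i : sub0 i 0 = 0.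
Proof. by rewrite sub0E /sub0_def raddf0. Qed.
Lemma sub01 i : sub0 i 1 = 1.
Proof. by rewrite sub0E /sub0_def rmorph1. Qed.
Lemma sub0XU i j : sub0 i 'X_j = if j == i then 0 else 'X_j.
Proof. by rewrite sub0X mnm1E; case: (j =P i). Qed.
Lemma sub0Xn i k p : sub0 i (p ^+ k) = (sub0 i p) ^+ k.
Proof. by elim: k => [|k IH]; rewrite ?expr0 ?sub01 // !exprS sub0M IH. Qed.

Lemma sub0N i : {morph sub0 i : p / - p}.
Proof. by move=> p; rewrite sub0E /sub0_def raddfN. Qed.


Lemma mcoeff_sub0 i p m : (sub0 i p)@_m = if m i == 0%N then p@_m else 0.
Proof.
elim/mpolyind: p => [|c m' p _ _ IH]; first by rewrite sub00 !mcoeff0; case: ifP.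
rewrite sub0D sub0Z sub0X mcoeffD mcoeffZ IH mcoeffD mcoeffZ mcoeffX.
case: (eqVneq m' m) => [->|ne].
  by case: ifP => _; rewrite ?mcoeffX ?eqxx ?mcoeff0 ?mulr0 ?add0r.
case: ifP => _; rewrite ?mcoeffX ?(negbTE ne) ?mcoeff0 ?mulr0 ?add0r //.
Qed.

Lemma sub0_eq0 i p : sub0 i p = 0 -> exists q, p = 'X_i * q.
Proof.
move=> h; exists (\sum_(m <- msupp p) p@_m *: 'X_[m - U_(i)]).
rewrite mulr_sumr {1}[p]mpolyE !big_seq; apply: eq_bigr => m hm.
rewrite -scalerAr -mpolyXD; congr (_ *: 'X_[_]).
have : m i != 0%N.
  apply/negP => /eqP h0; move: hm; rewrite mcoeff_msupp.
  by have := mcoeff_sub0 i p m; rewrite h0 eqxx h mcoeff0 => <-; rewrite eqxx.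
by rewrite -lep1mP => /submK; rewrite addmC.
Qed.

Lemma factor_aux i n : forall p : MP, (msize p <= n)%N -> p != 0 ->
  exists k q, p = 'X_i ^+ k * q /\ sub0 i q != 0.
Proof.
elim: n => [|n IH] p hs hp.
  by move: hs; rewrite leqn0 msize_poly_eq0 (negbTE hp).
have [h|h] : sub0 i p = 0 \/ sub0 i p != 0.
  by case: eqP; [left|right].
2:
  by exists 0%N, p; split=> //; rewrite expr0 mul1r.
have [q eq] := sub0_eq0 h.
have hq : q != 0 by apply: contraNneq hp => hq; rewrite eq hq mulr0.
have hX : ('X_i : MP) != 0 by rewrite -msize_poly_eq0 msizeX mdeg1.
have : (msize q <= n)%N.
  by move: hs; rewrite eq msizeM // msizeX mdeg1.
move/IH => /(_ hq) [k [q1 [eq1 hq1]]]; exists k.+1, q1; split=> //.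
by rewrite eq eq1 exprS mulrA.
Qed.

Lemma factor i (p : MP) : p != 0 -> exists k q, p = 'X_i ^+ k * q /\ sub0 i q != 0.
Proof. exact: (@factor_aux i (msize p) p). Qed.


Lemma mderivXU i j : ('X_i : MP)^`M(j) = (i == j)%:R.
Proof.
rewrite mderivX mnm1E; case: (i =P j) => [->|_].
  by rewrite /= scale1r (_ : (U_(j) - U_(j) = 0)%MM) ?mpolyX0 //; apply/mnmP => k; rewrite mnmBE mnm0E subnn.
by rewrite scale0r.
Qed.

Lemma sub0_deriv i j p : j != i -> sub0 i (p^`M(j)) = (sub0 i p)^`M(j).
Proof.
move=> hji; elim/mpolyind: p => [|c m p _ _ IH]; first by rewrite mderiv0 sub00 mderiv0.
rewrite mderivD mderivZ !sub0D !sub0Z mderivD mderivZ IH; congr (_ *: _ + _).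
rewrite mderivX sub0Z !sub0X mnmBE mnm1E (negbTE hji) subn0.
by case: ifP => _; rewrite ?mderivX ?mderiv0 ?scaler0.
Qed.

Lemma msize_deriv (p : MP) j : (msize (p^`M(j)) <= (msize p).-1)%N.
Proof.
rewrite [X in (X <= _)%N]msizeE; apply/bigmax_leqP_seq => m hm _.
move: hm; rewrite mcoeff_msupp mcoeff_mderiv.
have [h|h] : p@_(m + U_(j)) = 0 \/ p@_(m + U_(j)) != 0 by case: eqP; [left|right].
  by rewrite h mul0rn eqxx.
move=> _; have := msize_mdeg_lt (m := (m + U_(j))%MM) (p := p).
rewrite mcoeff_msupp h mdegD mdeg1 addn1 => /(_ isT).
by case: (msize p) => // k; rewrite ltnS.
Qed.

Lemma msizeM_le' (p q : MP) : (msize (p * q) <= (msize p + msize q).-1)%N.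
Proof.
have [->|hp] : p = 0 \/ p != 0 by case: eqP; [left|right].
  by rewrite mul0r msize0.
have [->|hq] : q = 0 \/ q != 0 by case: eqP; [left|right].
  by rewrite mulr0 msize0.
by rewrite msizeM.
Qed.

Lemma msizeB_le (p q : MP) : (msize (p - q) <= maxn (msize p) (msize q))%N.
Proof. by rewrite -(msizeN q); apply: msizeD_le. Qed.


Lemma X_neq0 i : ('X_i : MP) != 0.
Proof. by rewrite -msize_poly_eq0 msizeX mdeg1. Qed.

Lemma Xn_neq0 i k : ('X_i : MP) ^+ k != 0.
Proof. by rewrite expf_neq0 // X_neq0. Qed.

Section Descent.
Variables (i : 'I_3) (L : MP -> MP) (W : MP) (S : MP -> Prop).
Hypothesis HLM : forall p q, L (p * q) = p * L q + q * L p.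
Hypothesis HLB : forall p q, L (p - q) = L p - L q.
Hypothesis HLC : forall c p, L (c%:MP * p) = c%:MP * L p.
Hypothesis HLX : L 'X_i = 'X_i * W.
Hypothesis HS1 : forall k p, S ('X_i ^+ k * p) -> S p.
Hypothesis HS2 : forall p q c, S p -> S q -> S (p - c%:MP * q).
Hypothesis Hgood : forall A B (p q : nat), S A -> S B ->
  sub0 i A != 0 -> sub0 i B != 0 ->
  B * L A - A * L B = ((q%:R - p%:R : K)%:MP) * W * A * B ->
  p = q /\ exists mu : K, sub0 i A = mu%:MP * sub0 i B.

Lemma LXn k p : L ('X_i ^+ k * p) = 'X_i ^+ k * ((k%:R : K)%:MP * W * p + L p).
Proof.
elim: k => [|k IH]; first by rewrite !expr0 !mul1r mpolyC0 !mul0r add0r.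
rewrite exprS -mulrA HLM IH HLX !mpolyC_nat -natr1; ring.
Qed.

Lemma step P Q p q P1 Q1 : S P -> S Q -> P = 'X_i ^+ p * P1 -> Q = 'X_i ^+ q * Q1 ->
  sub0 i P1 != 0 -> sub0 i Q1 != 0 -> Q * L P = P * L Q ->
  p = q /\ exists mu : K, sub0 i P1 = mu%:MP * sub0 i Q1.
Proof.
move=> SP SQ eP eQ h1 h2 e.
have SP1 : S P1 by apply: (HS1 (k := p)); rewrite -eP.
have SQ1 : S Q1 by apply: (HS1 (k := q)); rewrite -eQ.
apply: Hgood => //.
have E : 'X_i ^+ (p + q) * (Q1 * L P1 - P1 * L Q1 -
    ((q%:R - p%:R : K)%:MP) * W * P1 * Q1) = 0.
  rewrite mpolyCB !mpolyC_nat exprD.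
  have -> : 0 = Q * L P - P * L Q by rewrite e subrr.
  rewrite eP eQ !LXn !mpolyC_nat; ring.
move/eqP: E; rewrite mulf_eq0 (negbTE (Xn_neq0 _ _)) /= subr_eq0 => /eqP ->.
by [].
Qed.

Lemma descent P Q : S P -> S Q -> Q != 0 -> Q * L P = P * L Q ->
  exists mu : K, P = mu%:MP * Q.
Proof.
move=> SP SQ hQ e.
have [->|hP] : P = 0 \/ P != 0 by case: eqP; [left|right].
  by exists 0; rewrite mpolyC0 mul0r.
have [p [P1 [eP hP1]]] := factor i hP.
have [q [Q1 [eQ hQ1]]] := factor i hQ.
have [epq [mu emu]] := step SP SQ eP eQ hP1 hQ1 e.
exists mu; apply/eqP; rewrite -subr_eq0; apply/eqP.
set P' := P - mu%:MP * Q.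
have SP' : S P' by apply: HS2.
have e' : Q * L P' = P' * L Q.
  rewrite /P' HLB HLC; have : Q * L P - P * L Q = 0 by rewrite e subrr.
  move=> h; apply/eqP; rewrite -subr_eq0; apply/eqP; rewrite -h; ring.
have [//|hP'] : P' = 0 \/ P' != 0 by case: eqP; [left|right].
have [p' [P1' [eP' hP1']]] := factor i hP'.
have [ep'q _] := step SP' SQ eP' eQ hP1' hQ1 e'.
have hs : sub0 i (P1 - mu%:MP * Q1) = 0 by rewrite sub0B sub0M sub0C emu subrr.
have [T eT] := sub0_eq0 hs.
subst p p'.
have : 'X_i ^+ q * P1' = 'X_i ^+ q * ('X_i * T).
  by rewrite -eT -eP' /P' eP eQ; ring.
move/(mulfI (Xn_neq0 i q)) => eP1'.
by move: hP1'; rewrite eP1' sub0M sub0XU eqxx mul0r eqxx.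
Qed.

End Descent.



End Sub.

Section Sub2.
Variable R : realType.
Local Notation K := (Cx R).
Local Notation MP := {mpoly K[3]}.
Lemma sub0_id i (p : MP) : sub0 i (sub0 i p) = sub0 i p.
Proof.
elim/mpolyind: p => [|c m p _ _ IH]; first by rewrite !sub00.
rewrite !sub0D !sub0Z (@sub0X _ i m) IH.
by case: ifP => h; rewrite ?sub0X ?h // sub00.
Qed.

Lemma sub0_comm i j (p : MP) : sub0 i (sub0 j p) = sub0 j (sub0 i p).
Proof.
elim/mpolyind: p => [|c m p _ _ IH]; first by rewrite !sub00.
rewrite !sub0D !sub0Z IH !sub0X.
case hj: (m j == 0%N); case hi: (m i == 0%N); by rewrite /= ?sub0X ?hi ?hj ?sub00.
Qed.

Definition ix : 'I_3 := @Ordinal 3 0 isT.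
Definition iy : 'I_3 := @Ordinal 3 1 isT.
Definition iz : 'I_3 := @Ordinal 3 2 isT.

Lemma mnm3_eq0 (m : 'X_{1..3}) : m ix = 0%N -> m iy = 0%N -> m iz = 0%N -> m = 0%MM.
Proof.
move=> h1 h2 h3; apply/mnmP => -[[|[|[|j]]] hj]; rewrite mnm0E //.
- by rewrite (_ : Ordinal hj = ix) //; exact: val_inj.
- by rewrite (_ : Ordinal hj = iy) //; exact: val_inj.
- by rewrite (_ : Ordinal hj = iz) //; exact: val_inj.
Qed.

Lemma sub0X1 i (m : 'X_{1..3}) : m i = 0%N -> sub0 i ('X_[m] : MP) = 'X_[m].
Proof. by move=> h; rewrite sub0X h eqxx. Qed.
Lemma sub0X0 i (m : 'X_{1..3}) : m i != 0%N -> sub0 i ('X_[m] : MP) = 0.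
Proof. by move=> h; rewrite sub0X (negbTE h). Qed.

Lemma sub0_all (p : MP) : sub0 iy (sub0 ix (sub0 iz p)) = (p@_0)%:MP.
Proof.
elim/mpolyind: p => [|c m p _ _ IH]; first by rewrite !sub00 mcoeff0 mpolyC0.
rewrite !sub0D !sub0Z IH mcoeffD mcoeffZ mcoeffX mpolyCD.
congr (_ + _).
have [->|hm] : m = 0%MM \/ m != 0%MM by case: eqP; [left|right].
  by rewrite !sub0X1 ?mnm0E // mpolyX0 -mul_mpolyC mulr1 eqxx mulr1.
rewrite (negbTE hm) mulr0 mpolyC0.
have [hzm|hzm] : m iz = 0%N \/ m iz != 0%N by case: eqP; [left|right].
2: by rewrite sub0X0 // !sub00 scaler0.
have [hxm|hxm] : m ix = 0%N \/ m ix != 0%N by case: eqP; [left|right].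
2: by rewrite sub0X1 // sub0X0 // !sub00 scaler0.
have [hym|hym] : m iy = 0%N \/ m iy != 0%N by case: eqP; [left|right].
2: by rewrite sub0X1 // sub0X1 // sub0X0 // scaler0.
by move: hm; rewrite (mnm3_eq0 hxm hym hzm) eqxx.
Qed.

Lemma sub0_const (p : MP) : sub0 ix p = p -> sub0 iz p = p -> sub0 iy p = (p@_0)%:MP.
Proof. by move=> hx hz; rewrite -{1}hx -{1}hz sub0_all. Qed.

Lemma ne_xy : ix != iy. Proof. by []. Qed.
Lemma ne_xz : ix != iz. Proof. by []. Qed.
Lemma ne_yz : iy != iz. Proof. by []. Qed.
Lemma ne_yx : iy != ix. Proof. by []. Qed.
Lemma ne_zx : iz != ix. Proof. by []. Qed.
Lemma ne_zy : iz != iy. Proof. by []. Qed.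

Lemma dXe i : (('X_i : MP))^`M(i) = 1.
Proof. by rewrite mderivXU eqxx. Qed.
Lemma dXn i j : i != j -> (('X_i : MP))^`M(j) = 0.
Proof. by move=> h; rewrite mderivXU (negbTE h). Qed.

Lemma sub0_Xnp i j k (p : MP) : j != i -> sub0 i ('X_j ^+ k * p) = 'X_j ^+ k * sub0 i p.
Proof. by move=> h; rewrite sub0M sub0Xn sub0XU (negbTE h). Qed.

Definition Ey (p : MP) : MP := 'X_iy * (-1) * p^`M(iy).
Definition Sy (p : MP) : Prop := sub0 ix p = p /\ sub0 iz p = p.

Lemma natK_inj (p q : nat) : ((q%:R - p%:R : K)%:MP : MP) = 0 -> p = q.
Proof.
move/eqP; rewrite mpolyC_eq0 subr_eq0 eqr_nat => /eqP ->. by [].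
Qed.

Lemma goodY (A B : MP) (p q : nat) : Sy A -> Sy B ->
  sub0 iy A != 0 -> sub0 iy B != 0 ->
  B * Ey A - A * Ey B = ((q%:R - p%:R : K)%:MP) * (-1) * A * B ->
  p = q /\ exists mu : K, sub0 iy A = mu%:MP * sub0 iy B.
Proof.
move=> [hA1 hA2] [hB1 hB2] nA nB e.
have sE : forall f g, sub0 iy (g * Ey f) = 0.
  by move=> f g; rewrite /Ey !sub0M sub0XU eqxx !mul0r mulr0.
have e0 := congr1 (sub0 iy) e.
rewrite sub0B !sE subrr !sub0M sub0N sub01 in e0.
split.
  apply: natK_inj; apply/eqP; move/esym/eqP: e0.
  by rewrite sub0C !mulf_eq0 (negbTE nA) (negbTE nB) oppr_eq0 oner_eq0 !orbF.
have cA := sub0_const hA1 hA2; have cB := sub0_const hB1 hB2.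
exists (A@_0 / B@_0); rewrite cA cB -mpolyCM divfK //.
by move: nB; rewrite cB mpolyC_eq0.
Qed.

Lemma levelY (P Q : MP) : Sy P -> Sy Q -> Q != 0 -> Q * Ey P = P * Ey Q ->
  exists mu : K, P = mu%:MP * Q.
Proof.
apply: (descent (i:=iy) (L:=Ey) (W:=-1) (S:=Sy)).
- by move=> p q; rewrite /Ey mderivM; ring.
- by move=> p q; rewrite /Ey mderivB; ring.
- by move=> c p; rewrite /Ey mderiv_mulC; ring.
- by rewrite /Ey dXe; ring.
- move=> k p [h1 h2]; split; apply: (mulfI (Xn_neq0 _ iy k));
    by rewrite -sub0_Xnp ?ne_yx ?ne_yz ?h1 ?h2.
- move=> p q c [h1 h2] [h3 h4]; split; by rewrite sub0B sub0M sub0C ?h1 ?h2 ?h3 ?h4.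
- exact: goodY.
Qed.

End Sub2.

Section Sub3.
Variable R : realType.
Local Notation K := (Cx R).
Local Notation MP := {mpoly K[3]}.

Lemma ms_mul (p q : MP) a b : (msize p <= a)%N -> (msize q <= b)%N ->
  (msize (p * q) <= (a + b).-1)%N.
Proof. move=> ha hb; have := msizeM_le' p q; lia. Qed.

Lemma ms_add (p q : MP) a b : (msize p <= a)%N -> (msize q <= b)%N ->
  (msize (p + q) <= maxn a b)%N.
Proof. move=> ha hb; have := msizeD_le p q; lia. Qed.

Lemma ms_sub (p q : MP) a b : (msize p <= a)%N -> (msize q <= b)%N ->
  (msize (p - q) <= maxn a b)%N.
Proof. move=> ha hb; have := msizeB_le p q; lia. Qed.

Lemma ms_C (k : K) : (msize (k%:MP : MP) <= 1)%N.
Proof. by rewrite msizeC; case: (k != 0). Qed.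

Lemma ms_1 : (msize (1 : MP) <= 1)%N.
Proof. by rewrite msize1. Qed.

Lemma ms_N1 : (msize (-1 : MP) <= 1)%N.
Proof. by rewrite msizeN msize1. Qed.

Lemma ms_X i : (msize ('X_i : MP) <= 2)%N.
Proof. by rewrite msizeX mdeg1. Qed.

Lemma deg_contra (L : MP -> MP) (r : nat) (W A B : MP) (k : K) :
  (forall f, f != 0 -> (msize (L f) <= msize f + r)%N) -> (r + 2 <= msize W)%N ->
  A != 0 -> B != 0 ->
  B * L A - A * L B = k%:MP * W * A * B -> k = 0.
Proof.
move=> hL hW nA nB e; have [//|nk] : k = 0 \/ k != 0 by case: eqP; [left|right].
have nW : W != 0 by rewrite -msize_poly_eq0; apply/eqP => h; rewrite h in hW; lia.
have nkm : (k%:MP : MP) != 0 by rewrite mpolyC_eq0.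
have hR : msize (k%:MP * W * A * B) = ((msize W + msize A).-1 + msize B).-1.
  have nkW : (k%:MP * W : MP) != 0 by rewrite mulf_neq0.
  have nkWA : (k%:MP * W * A : MP) != 0 by rewrite mulf_neq0.
  rewrite msizeM // msizeM // msizeM // msizeC nk.
  by rewrite add1n.
have h1 := ms_mul (leqnn (msize B)) (hL A nA).
have h2 := ms_mul (leqnn (msize A)) (hL B nB).
have h3 := ms_sub h1 h2.
rewrite e hR in h3.
have hA : (1 <= msize A)%N by rewrite lt0n msize_poly_eq0.
have hB : (1 <= msize B)%N by rewrite lt0n msize_poly_eq0.
lia.
Qed.


Lemma natK_inj' (p q : nat) : (q%:R - p%:R : K) = 0 -> p = q.
Proof. by move/eqP; rewrite subr_eq0 eqr_nat => /eqP ->. Qed.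

Lemma ms_Ey (f : MP) : f != 0 -> (msize (Ey f) <= msize f + 0)%N.
Proof.
move=> nf; have hf : (1 <= msize f)%N by rewrite lt0n msize_poly_eq0.
apply: leq_trans; first exact: (ms_mul (ms_mul (ms_X iy) ms_N1) (msize_deriv f iy)).
lia.
Qed.

Lemma ms_1y : (2 <= msize (1 - 'X_iy : MP))%N.
Proof.
have h : (1 - 'X_iy : MP)@_(U_(iy)%MM) != 0.
  rewrite mcoeffB mcoeff1 mcoeffXU eqxx.
  by rewrite (_ : (U_(iy)%MM == 0%MM) = false) ?sub0r ?oppr_eq0 ?oner_eq0 // mnm1_eq0.
have := msize_mdeg_lt (m := U_(iy)%MM) (p := (1 - 'X_iy : MP)).
by rewrite mcoeff_msupp h mdeg1 => /(_ isT).
Qed.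

Variables (a b c : R).

Definition Wx : MP := 1 - 'X_iy + cst c * 'X_ix.
Definition D0 (p : MP) : MP :=
  'X_ix * Wx * p^`M(ix) + 'X_iy * (-1 + 'X_ix) * p^`M(iy).
Definition Sx (p : MP) : Prop := sub0 iz p = p.

Lemma sD0 f g : sub0 ix (g * D0 f) = sub0 ix g * Ey (sub0 ix f).
Proof.
rewrite /D0 /Ey sub0M sub0D !sub0M sub0XU eqxx !mul0r add0r.
rewrite sub0XU (negbTE ne_yx) sub0D sub0N sub01 sub0XU eqxx addr0.
by rewrite sub0_deriv ?ne_yx.
Qed.

Lemma sWx : sub0 ix Wx = 1 - 'X_iy.
Proof.
rewrite /Wx sub0D sub0B sub01 sub0M !sub0XU (negbTE ne_yx).
by rewrite (_ : (ix == ix) = true) ?eqxx // mulr0 addr0.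
Qed.

Lemma ms_D0 (f : MP) : f != 0 -> (msize (D0 f) <= msize f + 1)%N.
Proof.
move=> nf; have hf : (1 <= msize f)%N by rewrite lt0n msize_poly_eq0.
have hW : (msize Wx <= 2)%N.
  exact: (ms_add (ms_sub ms_1 (ms_X iy)) (ms_mul (ms_C _) (ms_X ix))).
apply: leq_trans; first exact: (ms_add (ms_mul (ms_mul (ms_X ix) hW) (msize_deriv f ix))
               (ms_mul (ms_mul (ms_X iy) (ms_add ms_N1 (ms_X ix))) (msize_deriv f iy))).
lia.
Qed.

Lemma goodX (A B : MP) (p q : nat) : Sx A -> Sx B ->
  sub0 ix A != 0 -> sub0 ix B != 0 ->
  B * D0 A - A * D0 B = ((q%:R - p%:R : K)%:MP) * Wx * A * B ->
  p = q /\ exists mu : K, sub0 ix A = mu%:MP * sub0 ix B.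
Proof.
move=> hA hB nA nB e.
have e0 := congr1 (sub0 ix) e.
rewrite sub0B !sD0 !sub0M sub0C sWx in e0.
have k0 := deg_contra ms_Ey ms_1y nA nB e0.
split; first exact: natK_inj'.
rewrite k0 mpolyC0 !mul0r in e0; move/eqP: e0; rewrite subr_eq0 => /eqP e0.
have SA : Sy (sub0 ix A) by split; [exact: sub0_id | rewrite sub0_comm hA].
have SB : Sy (sub0 ix B) by split; [exact: sub0_id | rewrite sub0_comm hB].
exact: (levelY SA SB nB e0).
Qed.

Lemma levelX (P Q : MP) : Sx P -> Sx Q -> Q != 0 -> Q * D0 P = P * D0 Q ->
  exists mu : K, P = mu%:MP * Q.
Proof.
apply: (descent (i:=ix) (L:=D0) (W:=Wx) (S:=Sx)).
- by move=> p q; rewrite /D0 !mderivM; ring.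
- by move=> p q; rewrite /D0 !mderivB; ring.
- by move=> k p; rewrite /D0 !mderiv_mulC; ring.
- by rewrite /D0 dXe dXn ?ne_xy //; ring.
- move=> k p h; apply: (mulfI (Xn_neq0 _ ix k));
    by rewrite -sub0_Xnp ?ne_xz ?h.
- by move=> p q k h1 h2; rewrite /Sx sub0B sub0M sub0C h1 h2.
- exact: goodX.
Qed.

End Sub3.

Section Sub4.
Local Open Scope complex_scope.
Variable R : realType.
Local Notation K := (Cx R).
Local Notation MP := {mpoly K[3]}.
Variables (a b c : R).
Hypothesis ha : 0 < a.

Definition Wz : MP := - cst b + cst a * 'X_ix ^+ 2.

Lemma XfE (p : MP) : Xfield a b c p =
  'X_ix * (1 - 'X_iy + cst c * 'X_ix - cst a * 'X_ix * 'X_iz) * p^`M(ix)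
  + 'X_iy * (-1 + 'X_ix) * p^`M(iy) + 'X_iz * Wz * p^`M(iz).
Proof. by []. Qed.

Lemma sD (f g : MP) : sub0 iz (g * Xfield a b c f) = sub0 iz g * D0 c (sub0 iz f).
Proof.
rewrite XfE sub0M; congr (_ * _).
rewrite !(sub0D, sub0B, sub0N, sub0M, sub0C, sub01).
rewrite !sub0XU eqxx (negbTE ne_xz) (negbTE ne_yz) ?mul0r ?mulr0 ?addr0.
rewrite (sub0_deriv _ ne_xz) (sub0_deriv _ ne_yz) /D0 /Wx; ring.
Qed.

Lemma sWz : sub0 iz Wz = Wz.
Proof.
by rewrite /Wz sub0D sub0N sub0M sub0Xn !sub0C sub0XU (negbTE ne_xz).
Qed.

Lemma ms_Wz : (1 + 2 <= msize Wz)%N.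
Proof.
pose m := (U_(ix) *+ 2)%MM.
have hm : (m == 0%MM) = false by rewrite -mdeg_eq0 mdegMn mdeg1.
have ha' : (a%:C : K) != 0.
  rewrite eq_complex /= negb_and; apply/orP; left; by rewrite gt_eqF.
have h : Wz@_m != 0.
  rewrite /Wz mcoeffD mcoeffN mcoeffC hm mulr0 oppr0 add0r.
  by rewrite mcoeffCM mpolyXn mcoeffX eqxx mulr1.
have := msize_mdeg_lt (m := m) (p := Wz).
by rewrite mcoeff_msupp h mdegMn mdeg1 => /(_ isT).
Qed.

Lemma goodZ (A B : MP) (p q : nat) : True -> True ->
  sub0 iz A != 0 -> sub0 iz B != 0 ->
  B * Xfield a b c A - A * Xfield a b c B = ((q%:R - p%:R : K)%:MP) * Wz * A * B ->
  p = q /\ exists mu : K, sub0 iz A = mu%:MP * sub0 iz B.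
Proof.
move=> _ _ nA nB e.
have e0 := congr1 (sub0 iz) e.
rewrite sub0B !sD !sub0M sub0C sWz in e0.
have k0 := deg_contra (@ms_D0 R c) ms_Wz nA nB e0.
split; first exact: (natK_inj' k0).
rewrite k0 mpolyC0 !mul0r in e0; move/eqP: e0; rewrite subr_eq0 => /eqP e0.
have SA : Sx (sub0 iz A) by rewrite /Sx sub0_id.
have SB : Sx (sub0 iz B) by rewrite /Sx sub0_id.
exact: (levelX SA SB nB e0).
Qed.

Lemma levelZ (P Q : MP) : Q != 0 -> Q * Xfield a b c P = P * Xfield a b c Q ->
  exists mu : K, P = mu%:MP * Q.
Proof.
apply: (descent (i:=iz) (L:=Xfield a b c) (W:=Wz) (S:=fun _ => True)) => //.
- by move=> p q; rewrite !XfE !mderivM; ring.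
- by move=> p q; rewrite !XfE !mderivB; ring.
- by move=> k p; rewrite !XfE !mderiv_mulC; ring.
- by rewrite XfE dXe !dXn ?ne_zx ?ne_zy //; ring.
- exact: goodZ.
Qed.

End Sub4.

Unset Implicit Arguments.

Theorem theorem1p5 (R : realType) (a b c : R) :
  0 < a -> 0 < c -> 0 <= b ->
  ~ exists P Q : {mpoly (Cx R)[3]},
      rational_first_integral a b c P Q /\ rat_nonconstant P Q.
Proof.
move=> ha _ _ [P [Q [[hQ e] hnc]]]; apply: hnc.
exact: (levelZ ha hQ e).
Qed.
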